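(* Define $\pi:L_\infty(0,\infty)\to\mathbb{R}$ by $\pi(y)=\limsup_{N\to\infty}\frac1{\log(\log N)}\int_N^{N\log N}\frac{y(s)}{s}ds$. (1) If $\omega\in L_\infty(0,\infty)^*$ satisfies $\omega(y)\le\pi(y)$ for all $y\in L_\infty(0,\infty)$, then $\omega$ is a dilation invariant generalised limit. (2) If $x\in L_\infty(0,\infty)$ is positive and $\pi(x)>0$, then there exists a dilation invariant generalised limit $\omega$ such that $\omega(x)>0$.
   Context: Functions are real-valued. A generalised limit on $L_\infty(0,\infty)$ is a positive linear functional $\omega$ with $\omega(1)=1$ and $\omega(y)=0$ whenever $y(t)\to0$ as $t\to\infty$; it is dilation invariant if $\omega(\sigma_ny)=\omega(y)$ for all $n\in\mathbb{N}$ and $y$, where $(\sigma_ny)(t)=y(t/n)$. *)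

(* Defs.v *)
From HB Require Import structures.
From mathcomp Require Import all_boot all_order all_algebra.
From mathcomp Require Import all_classical all_reals all_analysis.
Set Implicit Arguments. Unset Strict Implicit. Unset Printing Implicit Defensive.
Import Order.TTheory GRing.Theory Num.Theory.
Import numFieldNormedType.Exports.
Local Open Scope classical_set_scope.
Local Open Scope ring_scope.

Section Defs.
Variable R : realType.
Local Notation mu := (@lebesgue_measure R).

Definition ae_pos (P : R -> Prop) : Prop := {ae mu, forall t, 0 < t -> P t}.

(* Representatives of elements of L_oo(0,oo): measurable on (0,oo) and
   essentially bounded there.  Only values on (0,oo) matter. *)
Definition Linf (y : R -> R) : Prop :=
  measurable_fun (`]0, +oo[ : set R) y /\ exists C : R, ae_pos (fun t => `|y t| <= C).

Definition aeeq (y1 y2 : R -> R) : Prop := ae_pos (fun t => y1 t = y2 t).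

(* a (well-defined on classes) linear functional on L_oo(0,oo) *)
Definition Linf_linear (w : (R -> R) -> R) : Prop :=
  (forall y1 y2, Linf y1 -> Linf y2 -> aeeq y1 y2 -> w y1 = w y2) /\
  (forall (a : R) y1 y2, Linf y1 -> Linf y2 ->
      w (fun t => a * y1 t + y2 t) = a * w y1 + w y2).

Definition Linf_dual (w : (R -> R) -> R) : Prop :=
  Linf_linear w /\
  exists C : R, forall y (M : R), Linf y -> ae_pos (fun t => `|y t| <= M) ->
      `|w y| <= C * M.

Definition vanishes_at_infty (y : R -> R) : Prop :=
  forall e : R, 0 < e -> exists T : R, ae_pos (fun t => T < t -> `|y t| <= e).

Definition gen_limit (w : (R -> R) -> R) : Prop :=
  Linf_linear w /\
  (forall y, Linf y -> ae_pos (fun t => 0 <= y t) -> 0 <= w y) /\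
  w (fun _ => 1) = 1 /\
  (forall y, Linf y -> vanishes_at_infty y -> w y = 0).

Definition dilation (n : nat) (y : R -> R) : R -> R := fun t => y (t / n%:R).

Definition dilation_invariant (w : (R -> R) -> R) : Prop :=
  forall (n : nat) y, (0 < n)%N -> Linf y -> w (dilation n y) = w y.

Definition pi_avg (y : R -> R) (N : R) : R :=
  (ln (ln N))^-1 * Rintegral mu (`[N, N * ln N] : set R) (fun s => y s / s).

Definition pi_fun (y : R -> R) : \bar R :=
  limf_esup (fun N => (pi_avg y N)%:E) (+oo%R : set_system R).

End Defs.

(* Main.v *)
Require Import Defs.
From HB Require Import structures.
From mathcomp Require Import all_boot all_order all_algebra.
From mathcomp Require Import all_classical all_reals all_analysis.
From mathcomp Require Import measurable_realfun.
From mathcomp Require Import ring lra.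
Import Order.TTheory GRing.Theory Num.Theory.
Import numFieldNormedType.Exports.
Local Open Scope classical_set_scope.
Local Open Scope ring_scope.
Set Implicit Arguments. Unset Strict Implicit. Unset Printing Implicit Defensive.

Section Core.
Variable R : realType.
Local Notation mu := (@lebesgue_measure R).

#[local] Instance aeF : Filter (almost_everywhere (@lebesgue_measure R)).
Proof. exact: ae_filter_ringOfSetsType. Qed.
#[local] Instance aeF' : Filter (nbhs (almost_everywhere (@lebesgue_measure R))).
Proof. exact: ae_filter_ringOfSetsType. Qed.

Lemma ae_posS (P Q : R -> Prop) : (forall t, 0 < t -> P t -> Q t) ->
  ae_pos P -> ae_pos Q.
Proof. by move=> H; rewrite /ae_pos; apply: filterS => t h t0; apply: H (h t0). Qed.

Lemma ae_posS2 (P Q S : R -> Prop) : (forall t, 0 < t -> P t -> Q t -> S t) ->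
  ae_pos P -> ae_pos Q -> ae_pos S.
Proof.
by move=> H; rewrite /ae_pos; apply: filterS2 => t h1 h2 t0; apply: H (h1 t0) (h2 t0).
Qed.

Lemma Linf_comb (a : R) (y1 y2 : R -> R) : Linf y1 -> Linf y2 ->
  Linf (fun t => a * y1 t + y2 t).
Proof.
move=> [m1 [C1 h1]] [m2 [C2 h2]]; split.
  apply: measurable_funD => //; apply: measurable_funM => //.
exists (`|a| * C1 + C2).
apply: ae_posS2 h1 h2 => t t0 h1 h2.
by rewrite (le_trans (ler_normD _ _))// lerD// normrM ler_wpM2l.
Qed.

Lemma Linf_cst (c : R) : Linf (fun _ => c).
Proof.
split; first exact: measurable_cst.
by exists `|c|; apply: aeW.
Qed.

Lemma meas_inv : measurable_fun (`]0, +oo[ : set R) (fun s : R => s^-1).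
Proof.
apply: open_continuous_measurable_fun; first exact: interval_open.
move=> x; rewrite inE /= in_itv /= andbT => x0.
by apply: inv_continuous; rewrite gt_eqF.
Qed.

Lemma sub_itv0 (a b : R) : 0 < a -> `[a, b] `<=` (`]0, +oo[ : set R).
Proof.
move=> a0 x /=; rewrite !in_itv /= andbT => /andP[ax _].
exact: lt_le_trans ax.
Qed.

Lemma meas_J (y : R -> R) (a b : R) : Linf y -> 0 < a ->
  measurable_fun `[a, b] (fun s => y s / s).
Proof.
move=> [my _] a0.
apply: measurable_funM.
  by apply: measurable_funS my => //; exact: sub_itv0.
by apply: measurable_funS meas_inv => //; exact: sub_itv0.
Qed.

Lemma mu_itv_fin (a b c : R) : (c%:E * mu `[a, b] < +oo)%E.
Proof.
have -> := lebesgue_measure_itv `[a, b].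
by case: ifP => _; [rewrite /= -EFinB -EFinM ltry | rewrite mule0 ltry].
Qed.

Lemma int_J (y : R -> R) (a b : R) : Linf y -> 0 < a ->
  mu.-integrable `[a, b] (EFin \o (fun s => y s / s)).
Proof.
move=> Ly a0; have mJ := @meas_J y a b Ly a0.
case: Ly => my [C hC].
apply/integrableP; split; first exact/measurable_EFinP.
apply: (le_lt_trans (@integral_le_bound _ _ _ mu `[a, b] (EFin \o (fun s => y s / s)) (`|C| / a)%:E _ _ _ _)) => //.
- exact/measurable_EFinP.
- by rewrite lee_fin divr_ge0// ltW.
- move: hC; rewrite /ae_pos; apply: filterS => t ht tab.
  have t0 : 0 < t by move: (sub_itv0 (b:=b) a0 tab); rewrite /= in_itv/= andbT.
  rewrite /= lee_fin normrM normfV (gtr0_norm t0) ler_pdivrMr//.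
  rewrite (le_trans (ht t0))// (le_trans (ler_norm C))//.
  rewrite -mulrA ler_peMr// mulrC ler_pdivlMr// mul1r.
  by move: tab; rewrite /= in_itv /= => /andP[].
- exact: mu_itv_fin.
Qed.


Definition J (y : R -> R) (a b : R) := Rintegral mu `[a, b] (fun s => y s / s).

Lemma J_lin (c : R) (y1 y2 : R -> R) (a b : R) : Linf y1 -> Linf y2 -> 0 < a ->
  J (fun t => c * y1 t + y2 t) a b = c * J y1 a b + J y2 a b.
Proof.
move=> L1 L2 a0; rewrite /J.
rewrite (@eq_Rintegral _ _ _ mu _ (fun s => c * (y1 s / s) + y2 s / s)); last first.
  by move=> s _; rewrite mulrDl mulrA.
have i1 : mu.-integrable `[a, b] (EFin \o (fun s => c * (y1 s / s))).
  have h := @int_J (fun t => c * y1 t + 0) a b (Linf_comb c L1 (Linf_cst 0)) a0.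
  refine (eq_integrable _ _ _ _ h) => //.
  by move=> s _ /=; rewrite addr0 mulrA.
rewrite RintegralD //; last exact: int_J.
by rewrite RintegralZl //; exact: int_J.
Qed.

Lemma J_ge0 (w : R -> R) (a b : R) : Linf w -> 0 < a ->
  ae_pos (fun t => a <= t -> 0 <= w t) -> 0 <= J w a b.
Proof.
move=> Lw a0 hw; rewrite /J /Rintegral.
have -> : (\int[mu]_(x in `[a, b]) (w x / x)%:E =
    \int[mu]_(x in `[a, b]) (Num.max (w x / x) 0)%:E)%E.
  apply: ae_eq_integral => //.
  - by apply/measurable_EFinP; exact: meas_J.
  - apply/measurable_EFinP; apply: measurable_maxr; first exact: meas_J.
    exact: measurable_cst.
  - move: hw; rewrite /ae_pos; apply: filterS => t ht tab.
    have t0 : 0 < t by move: (sub_itv0 (b:=b) a0 tab); rewrite /= in_itv/= andbT.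
    have aT : a <= t by move: tab; rewrite /= in_itv /= => /andP[].
    congr (_%:E); apply/esym/max_idPl.
    by apply: divr_ge0; [exact: ht | exact: ltW].
by apply: fine_ge0; apply: integral_ge0 => s _; rewrite lee_fin le_max lexx orbT.
Qed.

Lemma J_mono (y z : R -> R) (a b : R) : Linf y -> Linf z -> 0 < a ->
  ae_pos (fun t => a <= t -> y t <= z t) -> J y a b <= J z a b.
Proof.
move=> Ly Lz a0 h.
have := @J_ge0 (fun t => -1 * y t + z t) a b (Linf_comb _ Ly Lz) a0.
rewrite J_lin // mulN1r addrC subr_ge0; apply.
by apply: ae_posS h => t t0 H /H; rewrite mulN1r addrC subr_ge0.
Qed.

Lemma J_cst (c a b : R) : 0 < a -> J (fun _ => c) a b = c * J (fun _ => 1) a b.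
Proof.
move=> a0; rewrite /J -RintegralZl //; last exact: (int_J _ (Linf_cst 1)).
by apply: eq_Rintegral => s _; rewrite mulrA mulr1.
Qed.

Lemma J_one (a b : R) : 0 < a -> a < b -> J (fun _ => 1) a b = ln b - ln a.
Proof.
move=> a0 ab; rewrite /J /Rintegral.
have b0 : 0 < b by exact: lt_trans ab.
transitivity (fine ((ln b)%:E - (ln a)%:E)%E); last by [].
congr fine.
transitivity (\int[mu]_(x in `[a, b]) (x^-1)%:E)%E.
  by apply: eq_integral => s _; rewrite mul1r.
apply: (@continuous_FTC2 _ _ (@ln R) a b ab).
- apply: continuous_in_subspaceT => x xab; apply: inv_continuous.
  by rewrite gt_eqF //; move: (sub_itv0 (b:=b) a0 (set_mem xab)); rewrite /= in_itv/= andbT.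
- split.
  + move=> x; rewrite /= in_itv /= => /andP[ax _].
    have hd := is_derive1_ln (lt_trans a0 ax).
    exact: (@ex_derive _ _ _ _ _ _ _ hd).
  + by apply: cvg_at_right_filter; apply: continuous_ln.
  + by apply: cvg_at_left_filter; apply: continuous_ln.
- move=> x; rewrite /= in_itv /= => /andP[ax _].
  have hd := is_derive1_ln (lt_trans a0 ax).
  by rewrite derive1E; apply: derive_val.
Qed.

Lemma J_split (y : R -> R) (a b c : R) : Linf y -> 0 < a -> a <= b -> b <= c ->
  J y a c = J y a b + J y b c.
Proof.
move=> Ly a0 ab bc; rewrite /J.
have iac := @int_J y a c Ly a0.
have := @Rintegral_itvB R (fun s => y s / s) (BLeft a) (BRight c) b iac.
rewrite !bnd_simp => /(_ ab bc) H.
have ibc : mu.-integrable `]b, c] (EFin \o (fun s => y s / s)).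
  apply: integrableS iac => //.
  move=> t; rewrite /= !in_itv /= => /andP[bt ->]; rewrite andbT.
  exact: le_trans ab (ltW bt).
have H2 := @Rintegral_itv_obnd_cbnd R b (BRight c) (fun s => y s / s) ibc.
by rewrite -H2 -H addrC subrK.
Qed.


Lemma scale_meas (k : R) (A : set R) : 0 < k -> measurable A ->
  mu ((fun s : R => s / k) @^-1` A) = (k%:E * mu A)%E.
Proof.
move=> k0 mA.
pose phi : measurableTypeR R -> measurableTypeR R := fun s => s / k.
have mphi : measurable_fun setT phi.
  by apply: measurable_funM => //; exact: measurable_cst.
have k1 : 0 <= k^-1 by rewrite invr_ge0 ltW.
pose kinv : {nonneg R} := NngNum k1.
have := @lebesgue_measure_unique R (mscale kinv (pushforward mu phi)).
move=> /(_ mphi) H.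
have hX : forall X : set R, ocitv X -> mu X = mscale kinv (pushforward mu phi) X.
  move=> m X [[x1 x2] _ <-]; rewrite /mscale /pushforward /=.
  have -> : pushforward mu phi `]x1, x2] = mu `]x1 * k, x2 * k].
    rewrite /pushforward; congr (mu _).
    apply/seteqP; split=> s; rewrite /phi /= !in_itv /=.
      by rewrite ltr_pdivlMr // ler_pdivrMr.
    by rewrite ltr_pdivlMr // ler_pdivrMr.
  rewrite !lebesgue_measure_itv /= !lte_fin ltr_pM2r //.
  case: ifP => _; last by rewrite mule0.
  rewrite -!EFinB -EFinM; congr (_%:E).
  by rewrite -mulrBl mulrCA mulVf ?mulr1 // gt_eqF.
have {H} := H (hX mphi) A mA.
rewrite /mscale /pushforward /= => ->.
by rewrite muleA -EFinM mulfV ?mul1e // gt_eqF.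
Qed.


Lemma Linf_dil (n : nat) (y : R -> R) : (0 < n)%N -> Linf y -> Linf (dilation n y).
Proof.
move=> n0 [my [C hC]].
have k0 : 0 < (n%:R : R) by rewrite ltr0n.
have mphi : measurable_fun setT (fun s : R => s / n%:R).
  by apply: measurable_funM => //; exact: measurable_cst.
split.
  change (measurable_fun (`]0, +oo[ : set R) (y \o (fun s : R => s / n%:R))).
  apply: (measurable_comp _ _ my) => //.
  - move=> _ [t + <-]; rewrite /= !in_itv /= !andbT => t0.
    exact: divr_gt0.
  - exact: measurable_funS mphi.
exists C; move: hC; rewrite /ae_pos => -[N [mN N0 hN]].
exists ((fun s : R => s / n%:R) @^-1` N); split.
- by rewrite -[X in measurable X]setTI; exact: mphi.
- by rewrite scale_meas // N0 mule0.
- move=> t /= Ht; apply: hN => /= H; apply: Ht => t0; apply: H.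
  exact: divr_gt0.
Qed.

Lemma Linf_pos (y : R -> R) : Linf y -> Linf (fun t => Num.max (y t) 0).
Proof.
move=> [my [C hC]]; split.
  by apply: measurable_maxr => //; exact: measurable_cst.
exists `|C|; apply: ae_posS hC => t t0 h.
rewrite /Num.max; case: ifP => _; first by rewrite normr0.
exact: le_trans h (ler_norm C).
Qed.


Lemma dil_J_pos (n : nat) (y : R -> R) (a b : R) : (0 < n)%N -> Linf y ->
  (forall t, 0 <= y t) -> 0 < a ->
  J (dilation n y) a b = J y (a / n%:R) (b / n%:R).
Proof.
move=> n0 Ly y0 a0.
have k0 : 0 < (n%:R : R) by rewrite ltr0n.
set k : R := n%:R in k0 *.
have ak0 : 0 < a / k by exact: divr_gt0.
rewrite /J /Rintegral; congr fine.
pose phi : measurableTypeR R -> measurableTypeR R := fun s => s / k.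
have mphi : measurable_fun setT phi.
  by apply: measurable_funM => //; exact: measurable_cst.
pose g : R -> R := fun u => y u / u * k^-1.
have mg : measurable_fun `[a / k, b / k] (EFin \o g).
  apply/measurable_EFinP; apply: measurable_funM; first exact: meas_J.
  exact: measurable_cst.
have g0 : forall u : R, [set` `[a / k, b / k]] u -> (0 <= (EFin \o g) u)%E.
  move=> u uab; have u0 : 0 < u.
    by move: (sub_itv0 (b:=b/k) ak0 uab); rewrite /= in_itv/= andbT.
  by rewrite /= lee_fin /g !divr_ge0 // ltW.
have P := @ge0_integral_pushforward _ _ _ _ R phi mphi mu `[a / k, b / k]
  (EFin \o g) (measurable_itv _) mg (fun u Hu => g0 u (set_mem Hu)).
transitivity (\int[mu]_(x in phi @^-1` `[(a / k)%R, (b / k)%R]) ((EFin \o g) \o phi) x)%E.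
  have -> : phi @^-1` `[(a / k)%R, (b / k)%R] = [set` `[a, b]].
    apply/seteqP; split=> s; rewrite /phi /= !in_itv /=.
      by rewrite !ler_pdivrMr // !divfK // gt_eqF.
    by rewrite !ler_pdivrMr // !divfK // gt_eqF.
  apply: eq_integral => s sab; rewrite /= /g /phi.
  have s0 : 0 < s by move: (sub_itv0 (b:=b) a0 (set_mem sab)); rewrite /= in_itv/= andbT.
  congr (_%:E).
  have sn : s != 0 by rewrite gt_eqF.
  have kn : k != 0 by rewrite gt_eqF.
  by rewrite /dilation -/k -mulrA invf_div mulrAC mulfV // mul1r.
apply: eq_trans (esym P) _.
have kk : 0 <= k by exact: ltW.
transitivity (\int[mscale (NngNum kk) mu]_(x in `[(a / k)%R, (b / k)%R]) (EFin \o g) x)%E.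
  apply: eq_measure_integral => A mA _; rewrite /mscale /pushforward /=.
  exact: scale_meas.
rewrite ge0_integral_mscale //=.
rewrite -ge0_integralZl //; try (by rewrite lee_fin ltW); try (exact: g0).
apply: eq_integral => u _; rewrite /g /= -EFinM; congr (_%:E).
have kn : k != 0 by rewrite gt_eqF.
by rewrite mulrC divfK.
Qed.


Lemma maxdec (x : R) : x = -1 * Num.max (- x) 0 + Num.max x 0.
Proof.
rewrite /Num.max oppr_lt0.
have [h|h|->] := ltrgtP x 0.
- by rewrite ?h ?(lt_gtF h); ring.
- by rewrite ?h ?(lt_gtF h); ring.
- by rewrite ?oppr0 ?mulr0 ?addr0.
Qed.

Lemma Linf_neg (y : R -> R) : Linf y -> Linf (fun t => Num.max (- y t) 0).
Proof.
move=> Ly; have := Linf_pos (Linf_comb (-1) Ly (Linf_cst 0)).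
by congr Linf; apply/funext => t; rewrite mulN1r addr0.
Qed.

Lemma dil_J (n : nat) (y : R -> R) (a b : R) : (0 < n)%N -> Linf y -> 0 < a ->
  J (dilation n y) a b = J y (a / n%:R) (b / n%:R).
Proof.
move=> n0 Ly a0.
have k0 : 0 < (n%:R : R) by rewrite ltr0n.
have ak0 : 0 < a / n%:R by exact: divr_gt0.
pose yp := fun t => Num.max (y t) 0.
pose ym := fun t => Num.max (- y t) 0.
have Lp : Linf yp := Linf_pos Ly.
have Lm : Linf ym := Linf_neg Ly.
have e1 : y = (fun t => -1 * ym t + yp t) by apply/funext => t; exact: maxdec.
have e2 : dilation n y = (fun t => -1 * dilation n ym t + dilation n yp t).
  by apply/funext => t; rewrite /dilation; exact: maxdec.
rewrite e2 J_lin //; try exact: Linf_dil.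
rewrite !dil_J_pos //; last 2 first.
- by move=> t; rewrite /yp le_max lexx orbT.
- by move=> t; rewrite /ym le_max lexx orbT.
by rewrite [in RHS]e1 J_lin.
Qed.


Lemma ln_gt (K x : R) : expR K < x -> K < ln x.
Proof.
move=> h; have x0 : 0 < x := lt_trans (expR_gt0 K) h.
by rewrite -[X in X < _](expRK K) ltr_ln // posrE expR_gt0.
Qed.

Section big.
Variable N : R.
Hypothesis hN : expR 1 < N.

Lemma N_gt0 : 0 < N. Proof. exact: lt_trans (expR_gt0 1) hN. Qed.
Lemma lnN_gt1 : 1 < ln N. Proof. exact: ln_gt. Qed.
Lemma lnN_gt0 : 0 < ln N. Proof. exact: lt_trans ltr01 lnN_gt1. Qed.
Lemma lnlnN_gt0 : 0 < ln (ln N). Proof. by apply: ln_gt0; exact: lnN_gt1. Qed.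
Lemma NM : N < N * ln N.
Proof. by rewrite ltr_pMr ?lnN_gt1 // N_gt0. Qed.

Lemma pi_J y : pi_avg y N = (ln (ln N))^-1 * J y N (N * ln N).
Proof. by []. Qed.

Lemma pi_lin (c : R) y1 y2 : Linf y1 -> Linf y2 ->
  pi_avg (fun t => c * y1 t + y2 t) N = c * pi_avg y1 N + pi_avg y2 N.
Proof.
move=> L1 L2; rewrite !pi_J J_lin //; last exact: N_gt0.
by rewrite mulrDr mulrCA.
Qed.

Lemma pi_one : pi_avg (fun _ => 1) N = 1.
Proof.
rewrite pi_J J_one //; last exact: NM; last exact: N_gt0.
rewrite lnM ?posrE ?N_gt0 ?lnN_gt0 // addrC addKr mulVf //.
by rewrite gt_eqF // lnlnN_gt0.
Qed.

Lemma pi_cst (c : R) : pi_avg (fun _ => c) N = c.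
Proof.
by rewrite pi_J J_cst ?N_gt0 // mulrCA -pi_J pi_one mulr1.
Qed.

Lemma pi_mono (T : R) y z : Linf y -> Linf z -> T < N ->
  ae_pos (fun t => T < t -> y t <= z t) -> pi_avg y N <= pi_avg z N.
Proof.
move=> Ly Lz TN h; rewrite !pi_J ler_wpM2l //.
  by rewrite invr_ge0 ltW // lnlnN_gt0.
apply: J_mono => //; first exact: N_gt0.
by apply: ae_posS h => t t0 H Nt; apply: H; exact: lt_le_trans TN Nt.
Qed.

Lemma pi_bound (T C : R) y : Linf y -> T < N ->
  ae_pos (fun t => T < t -> `|y t| <= C) -> `|pi_avg y N| <= C.
Proof.
move=> Ly TN h; rewrite ler_norml; apply/andP; split.
  rewrite -[X in X <= _](pi_cst (- C)).
  apply: (pi_mono (T := T)) => //; first exact: Linf_cst.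
  by apply: ae_posS h => t t0 H /H; rewrite ler_norml => /andP[].
rewrite -[X in _ <= X](pi_cst C).
apply: (pi_mono (T := T)) => //; first exact: Linf_cst.
by apply: ae_posS h => t t0 H /H; rewrite ler_norml => /andP[].
Qed.

End big.

Lemma J_bound (C : R) y (a b : R) : Linf y -> 0 < a -> a <= b ->
  ae_pos (fun t => `|y t| <= C) -> `|J y a b| <= C * (ln b - ln a).
Proof.
move=> Ly a0 ab h; have [eab|ab'] := eqVneq a b.
  rewrite -eab subrr mulr0 /J set_itv1 Rintegral_set1 normr0 //.
have {ab'} ab : a < b by rewrite lt_neqAle ab' ab.
rewrite -J_one // -J_cst // ler_norml; apply/andP; split.
  rewrite J_cst // -mulNr -J_cst //.
  apply: J_mono => //; first exact: Linf_cst.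
  by apply: ae_posS h => t t0 H _; move: H; rewrite ler_norml => /andP[].
apply: J_mono => //; first exact: Linf_cst.
by apply: ae_posS h => t t0 H _; move: H; rewrite ler_norml => /andP[].
Qed.


Lemma ln_div (x k : R) : 0 < x -> 0 < k -> ln x - ln (x / k) = ln k.
Proof.
move=> x0 k0; rewrite lnM ?posrE ?invr_gt0 // lnV ?posrE //.
ring.
Qed.

Lemma pi_dil (n : nat) y (C N : R) : (0 < n)%N -> Linf y ->
  ae_pos (fun t => `|y t| <= C) -> expR 1 < N -> n%:R <= ln N ->
  `|pi_avg (dilation n y) N - pi_avg y N| <= (ln (ln N))^-1 * (2 * C * ln n%:R).
Proof.
move=> n0 Ly hC hN hk.
have k0 : 0 < (n%:R : R) by rewrite ltr0n.
have k1 : 1 <= (n%:R : R) by rewrite ler1n.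
set k : R := n%:R in k0 k1 hk *.
have N0 := N_gt0 hN; have L0 := lnN_gt0 hN; have LL0 := lnlnN_gt0 hN.
set M := N * ln N.
have M0 : 0 < M by rewrite mulr_gt0.
have Nk0 : 0 < N / k by exact: divr_gt0.
have e1 : N / k <= N by rewrite ler_pdivrMr // ler_peMr // ltW.
have e2 : N <= M / k by rewrite ler_pdivlMr // /M ler_pM2l.
have e3 : M / k <= M by rewrite ler_pdivrMr // ler_peMr // ltW.
have iL : 0 < (ln (ln N))^-1 by rewrite invr_gt0.
rewrite !pi_J -/M -mulrBr normrM (gtr0_norm iL).
apply: ler_wpM2l; first exact: ltW.
rewrite dil_J // -/k (J_split Ly Nk0 e1 e2) (@J_split y N (M / k) M Ly) //.
rewrite [X in `|X|](_ : _ = J y (N / k) N - J y (M / k) M); last by ring.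
apply: le_trans (ler_normB _ _) _.
rewrite (_ : 2 * C * ln k = C * ln k + C * ln k); last by ring.
apply: lerD.
- by rewrite -(ln_div N0 k0); apply: J_bound.
- rewrite -(ln_div M0 k0); apply: J_bound => //.
  exact: lt_le_trans Nk0 (le_trans e1 e2).
Qed.


Lemma ev_gt (K : R) : \forall N \near +oo%R, K < N.
Proof. by apply: nbhs_pinfty_gt; rewrite num_real. Qed.

Lemma pi_dil_ev (n : nat) y : (0 < n)%N -> Linf y -> forall e : R, 0 < e ->
  \forall N \near +oo%R, `|pi_avg (dilation n y) N - pi_avg y N| <= e.
Proof.
move=> n0 Ly e e0; have [_ [C hC]] := Ly.
set k : R := n%:R.
set K := 2 * `|C| * ln k / e.
have hC' : ae_pos (fun t => `|y t| <= `|C|).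
  by apply: ae_posS hC => t _ h; exact: le_trans h (ler_norm C).
near=> N.
have hN : expR 1 < N by near: N; exact: ev_gt.
have hk : k <= ln N.
  apply/ltW/ln_gt; near: N; exact: ev_gt.
have hK : K < ln (ln N).
  apply/ln_gt/ln_gt; near: N; exact: ev_gt.
have LL0 := lnlnN_gt0 hN.
apply: le_trans (pi_dil n0 Ly hC' hN hk) _.
rewrite mulrC ler_pdivrMr // -/k.
by rewrite [e * _]mulrC; move: hK; rewrite /K ltr_pdivrMr // => /ltW.
Unshelve. all: by end_near.
Qed.

Lemma pi_bdd y : Linf y -> exists C : R,
  \forall N \near +oo%R, `|pi_avg y N| <= C.
Proof.
move=> Ly; have [_ [C hC]] := Ly; exists C.
near=> N.
have hN : expR 1 < N by near: N; exact: ev_gt.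
apply: (@pi_bound N hN 0) => //.
by apply: ae_posS hC => t _ h _.
Unshelve. all: by end_near.
Qed.

Lemma pi_van y : Linf y -> vanishes_at_infty y -> forall e : R, 0 < e ->
  \forall N \near +oo%R, `|pi_avg y N| <= e.
Proof.
move=> Ly hv e e0; have [T hT] := hv e e0.
near=> N.
have hN : expR 1 < N by near: N; exact: ev_gt.
apply: (@pi_bound N hN T) => //.
by near: N; exact: ev_gt.
Unshelve. all: by end_near.
Qed.

Lemma pi_ge0 (y : R -> R) : Linf y -> ae_pos (fun t => 0 <= y t) ->
  \forall N \near +oo%R, 0 <= pi_avg y N.
Proof.
move=> Ly hy; near=> N.
have hN : expR 1 < N by near: N; exact: ev_gt.
have H : pi_avg (fun _ => 0) N <= pi_avg y N.
  apply: (@pi_mono N hN 0) => //; first exact: Linf_cst.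
  by apply: ae_posS hy => t _ h _.
by rewrite pi_cst in H.
Unshelve. all: by end_near.
Qed.

Lemma pi_eq (y1 y2 : R -> R) : Linf y1 -> Linf y2 -> aeeq y1 y2 ->
  \forall N \near +oo%R, pi_avg y1 N = pi_avg y2 N.
Proof.
move=> L1 L2 h; near=> N.
have hN : expR 1 < N by near: N; exact: ev_gt.
apply/eqP; rewrite eq_le; apply/andP; split.
- apply: (@pi_mono N hN 0) => //.
  by apply: ae_posS h => t _ -> _.
- apply: (@pi_mono N hN 0) => //.
  by apply: ae_posS h => t _ -> _.
Unshelve. all: by end_near.
Qed.

Lemma pi_lin_ev (c : R) (y1 y2 : R -> R) : Linf y1 -> Linf y2 ->
  \forall N \near +oo%R,
    pi_avg (fun t => c * y1 t + y2 t) N = c * pi_avg y1 N + pi_avg y2 N.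
Proof.
move=> L1 L2; near=> N.
have hN : expR 1 < N by near: N; exact: ev_gt.
by apply: pi_lin.
Unshelve. all: by end_near.
Qed.

Lemma pi_one_ev : \forall N \near +oo%R, pi_avg (fun _ : R => 1 : R) N = 1.
Proof.
near=> N.
have hN : expR 1 < N by near: N; exact: ev_gt.
by apply: pi_one.
Unshelve. all: by end_near.
Qed.

Lemma pi_cst_ev (c : R) : \forall N \near +oo%R, pi_avg (fun _ : R => c) N = c.
Proof.
near=> N.
have hN : expR 1 < N by near: N; exact: ev_gt.
by apply: pi_cst.
Unshelve. all: by end_near.
Qed.

Lemma pi_le_ev (y : R -> R) (c : R) : Linf y -> ae_pos (fun t => y t <= c) ->
  \forall N \near +oo%R, pi_avg y N <= c.
Proof.
move=> Ly hy; near=> N.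
have hN : expR 1 < N by near: N; exact: ev_gt.
have H : pi_avg y N <= pi_avg (fun _ => c) N.
  apply: (@pi_mono N hN 0) => //; first exact: Linf_cst.
  by apply: ae_posS hy => t _ h _.
by rewrite pi_cst in H.
Unshelve. all: by end_near.
Qed.

Lemma esup_le (f : R -> R) (c : R) : (\forall N \near +oo%R, f N <= c) ->
  (limf_esup (fun N => (f N)%:E) (+oo%R : set_system R) <= c%:E)%E.
Proof.
move=> h; rewrite limf_esupE.
apply: (@le_trans _ _ (ereal_sup ((fun N => (f N)%:E) @` [set N | f N <= c]))).
  by apply: ereal_inf_lbound; exists [set N | f N <= c].
by apply: ub_ereal_sup => _ [N hN <-]; rewrite lee_fin.
Qed.

Lemma esup_le0 (f : R -> R) :
  (forall e : R, 0 < e -> \forall N \near +oo%R, f N <= e) ->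
  (limf_esup (fun N => (f N)%:E) (+oo%R : set_system R) <= 0)%E.
Proof.
move=> h; apply/lee_addgt0Pr => e e0; rewrite add0e.
exact: esup_le (h e e0).
Qed.

Lemma ultra_cvg (G : set_system R) (f : R -> R) (C : R) : UltraFilter G ->
  (\forall N \near G, `|f N| <= C) -> cvg (f @ G).
Proof.
move=> GU hC.
have GP : ProperFilter G := @ultra_proper _ _ GU.
have : (f @ G) [set` `[-C, C]].
  apply: filterS hC => N; rewrite /= in_itv /= => h.
  by rewrite -ler_norml.
move=> /(@segment_compact R (- C) C (f @ G) (fmap_proper_filter f GP)) [p [_ cp]].
apply/cvg_ex; exists p => B hB.
have [//|hnB] := in_ultra_setVsetC (f @^-1` B) GU.
have [z [/= zB1 zB2]] := cp (~` B) B (ltac:(by move: hnB; rewrite preimage_setC)) hB.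
by case: zB1.
Qed.

Lemma near_lim (G : set_system R) (f g : R -> R) (l : R) : ProperFilter G ->
  f @ G --> l -> (\forall N \near G, f N = g N) -> lim (g @ G) = l.
Proof.
move=> GP hf H; apply/cvg_lim => //.
exact: cvg_trans (near_eq_cvg H) hf.
Qed.

End Core.

Theorem lemma1p4 (R : realType) :
  (forall w : (R -> R) -> R, Linf_dual w ->
     (forall y, Linf y -> ((w y)%:E <= pi_fun y)%E) ->
     gen_limit w /\ dilation_invariant w) /\
  (forall x : R -> R, Linf x -> ae_pos (fun t => 0 <= x t) ->
     (0 < pi_fun x)%E ->
     exists w : (R -> R) -> R,
       gen_limit w /\ dilation_invariant w /\ 0 < w x).
Proof.
split.
  move=> w [[weq wlin] _] hpi.
  have w0 : w (fun _ => 0) = 0.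
    have := wlin 1 (fun _ => 0) (fun _ => 0) (Linf_cst 0) (Linf_cst 0).
    rewrite /= (_ : (fun t : R => 1 * 0 + 0) = fun _ => 0); last first.
      by apply/funext => t; rewrite mulr0 addr0.
    rewrite mul1r => /(congr1 (fun v => v - w (fun _ => 0))).
    by rewrite subrr addrK.
  have wneg : forall y, Linf y -> w (fun t => -1 * y t + 0) = - w y.
    move=> y Ly; have := wlin (-1) y (fun _ => 0) Ly (Linf_cst 0).
    by rewrite /= w0 addr0 mulN1r.
  have wle : forall y c, Linf y -> (\forall N \near +oo%R, pi_avg y N <= c) -> w y <= c.
    move=> y c Ly h; rewrite -lee_fin; apply: le_trans (hpi y Ly) _.
    exact: esup_le.
  have wle0 : forall y, Linf y ->
      (forall e : R, 0 < e -> \forall N \near +oo%R, pi_avg y N <= e) -> w y <= 0.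
    move=> y Ly h; rewrite -lee_fin; apply: le_trans (hpi y Ly) _.
    exact: esup_le0.
  have wdiff : forall y z, Linf y -> Linf z ->
      (forall e : R, 0 < e -> \forall N \near +oo%R, `|pi_avg z N - pi_avg y N| <= e) ->
      w z = w y.
    move=> y z Ly Lz h; apply/eqP; rewrite eq_le; apply/andP; split.
    - have := wle0 _ (Linf_comb (-1) Ly Lz).
      rewrite wlin // mulN1r addrC subr_le0; apply => e e0.
      apply: filterS2 (pi_lin_ev (-1) Ly Lz) (h e e0) => N -> hN.
      rewrite mulN1r addrC; exact: le_trans (ler_norm _) hN.
    - have := wle0 _ (Linf_comb (-1) Lz Ly).
      rewrite wlin // mulN1r addrC subr_le0; apply => e e0.
      apply: filterS2 (pi_lin_ev (-1) Lz Ly) (h e e0) => N -> hN.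
      rewrite mulN1r addrC -opprB; apply: le_trans hN.
      by rewrite -normrN ler_norm.
  split; last first.
    move=> n y n0 Ly; apply: wdiff => //; first exact: Linf_dil.
    exact: pi_dil_ev.
  split; first by split.
  split.
    move=> y Ly hy.
    have := wle _ 0 (Linf_comb (-1) Ly (Linf_cst 0)) _.
    rewrite wneg // oppr_le0; apply.
    apply: pi_le_ev; first exact: (Linf_comb (-1) Ly (Linf_cst 0)).
    by apply: ae_posS hy => t _ h; rewrite mulN1r addr0 oppr_le0.
  split.
    apply/eqP; rewrite eq_le; apply/andP; split.
      apply: wle; first exact: Linf_cst.
      by apply: pi_le_ev; [exact: Linf_cst | exact: aeW].
    have := wle _ (-1) (Linf_comb (-1) (Linf_cst 1) (Linf_cst 0)) _.
    rewrite wneg; last exact: Linf_cst.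
    rewrite lerN2; apply.
    apply: pi_le_ev; first exact: (Linf_comb (-1) (Linf_cst 1) (Linf_cst 0)).
    by apply: aeW => t _; rewrite mulr1 addr0.
  move=> y Ly hv; rewrite -w0; apply: wdiff => //; first exact: Linf_cst.
  move=> e e0; apply: filterS2 (pi_cst_ev 0) (pi_van Ly hv e0) => N ->.
  by rewrite subr0.
move=> x Lx _ hx.
set p := pi_fun x.
have [C hC] := pi_bdd Lx.
have pC : (p <= C%:E)%E.
  apply: esup_le; apply: filterS hC => N h.
  exact: le_trans (ler_norm _) h.
have pfin : p \is a fin_num.
  by rewrite ge0_fin_numE ?ltW // (le_lt_trans pC) // ltry.
set c := fine p / 2.
have fp0 : 0 < fine p by apply: fine_gt0; rewrite hx /= -ge0_fin_numE // ltW.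
have c0 : 0 < c by rewrite divr_gt0.
have cp : (c%:E < p)%E.
  by rewrite -(fineK pfin) lte_fin /c ltr_pdivrMr // ltr_pMr // ltr1n.
set S := [set N | c < pi_avg x N].
have freq : forall V, (+oo%R : set_system R) V -> exists N, V N /\ S N.
  move=> V hV.
  have : (p <= ereal_sup ((fun N => (pi_avg x N)%:E) @` V))%E.
    by rewrite /p /pi_fun limf_esupE; apply: ereal_inf_lbound; exists V.
  move=> /(lt_le_trans cp) /ereal_sup_gt [_ [N VN <-]] hcN.
  by exists N; split => //; rewrite /S /= -lte_fin.
pose F0 := within S (+oo%R : set_system R).
have F0F : ProperFilter F0.
  apply: Build_ProperFilter_ex.
  move=> P hP; have [N [hN SN]] := freq _ hP.
  by exists N; exact: hN.
have [G [GU F0G]] := ultraFilterLemma F0F.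
have GP : ProperFilter G := @ultra_proper _ _ GU.
have pG : forall A : set R, (\forall N \near +oo%R, A N) -> G A.
  move=> A hA; apply: F0G; rewrite /F0 /within.
  by apply: filterS hA => N h _.
have SG : G S.
  by apply: F0G; rewrite /F0 /within; apply: nearW => N.
have cvgy : forall y, Linf y -> cvg (pi_avg y @ G).
  move=> y Ly; have [C' hC'] := pi_bdd Ly.
  exact: ultra_cvg GU (pG _ hC').
pose w := fun y : R -> R => lim (pi_avg y @ G).
have wE : forall y, Linf y -> pi_avg y @ G --> w y.
  by move=> y Ly; exact: cvgy.
exists w.
have wdiff : forall y z, Linf y -> Linf z ->
    (forall e : R, 0 < e -> \forall N \near +oo%R, `|pi_avg z N - pi_avg y N| <= e) ->
    w z = w y.
  move=> y z Ly Lz h.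
  apply: (@near_lim _ G (fun N => pi_avg y N + (pi_avg z N - pi_avg y N))) => //.
    rewrite -[w y]addr0; apply: cvgD; first exact: wE.
    apply/cvgr0Pnorm_le => e e0; exact: pG (h e e0).
  by apply: nearW => N; rewrite addrC subrK.
split; last split.
- split; first split.
  + move=> y1 y2 L1 L2 h; apply: (@near_lim _ G (pi_avg y2)) => //.
      exact: wE.
    by apply: pG; apply: filterS (pi_eq L1 L2 h) => N ->.
  + move=> a y1 y2 L1 L2.
    apply: (@near_lim _ G (fun N => a * pi_avg y1 N + pi_avg y2 N)) => //.
      apply: cvgD; last exact: wE.
      exact: cvgMl_tmp (wE _ L1).
    apply: pG; apply: filterS (pi_lin_ev a L1 L2) => N ->.
    by [].
  split.
    move=> y Ly hy; apply: limr_ge; first exact: cvgy.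
    exact: pG (pi_ge0 Ly hy).
  split.
    apply: (@near_lim _ G (fun _ => 1)) => //; first exact: cvg_cst.
    by apply: pG; apply: filterS (@pi_one_ev R) => N ->.
  move=> y Ly hv.
  apply: (@near_lim _ G (fun N => pi_avg y N)) => //; last by apply: nearW.
  apply/cvgr0Pnorm_le => e e0; exact: pG (pi_van Ly hv e0).
- move=> n y n0 Ly; apply: wdiff => //; first exact: Linf_dil.
  exact: pi_dil_ev.
- apply: (@lt_le_trans _ _ c) => //.
  apply: limr_ge; first exact: cvgy.
  by apply: filterS SG => N /ltW.
Qed.
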